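(* Let $q=p^f$ with $p$ prime, $n\ge2$ and $(n,q)\notin\{(2,2),(2,3)\}$. Let $\beta$ be a basis of $V=\mathbb{F}_q^n$ and $\phi=\phi_\beta$. Let $H\le\Gamma\mathrm{L}_n(q)$ with $H\cap\mathrm{GL}_n(q)\le Z(\mathrm{GL}_n(q))$. Then there exists $b\in\mathrm{GL}_n(q)$ such that every element of $H^b$ has the form $\phi^i g$ for some $i\in\{1,\dots,f\}$ and some $g\in Z(\mathrm{GL}_n(q))$.
   Context: $\Gamma\mathrm{L}_n(q)$ is the group of invertible $\mathbb{F}_q$-semilinear transformations of $V$. For $\beta=\{v_1,\dots,v_n\}$, $\phi_\beta$ is the semilinear map $\sum_i\lambda_iv_i\mapsto\sum_i\lambda_i^p v_i$, so $\Gamma\mathrm{L}_n(q)=\mathrm{GL}_n(q)\rtimes\langle\phi_\beta\rangle$. $Z(\mathrm{GL}_n(q))$ is the group of scalar matrices; $H^b=b^{-1}Hb$. *)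

(* Defs.v *)
From HB Require Import structures.
From mathcomp Require Import all_boot all_order all_algebra all_fingroup.
Set Implicit Arguments. Unset Strict Implicit. Unset Printing Implicit Defensive.
Import GRing.Theory.
Local Open Scope ring_scope.

(* V = F^n is modelled as row vectors 'rV[F]_n; elements of GammaL_n(q) are
   permutations of V (invertible maps) that are semilinear. *)

(* g is F-semilinear: additive and twisted by some field automorphism sigma
   (a ring endomorphism of a finite field is an automorphism). *)
Definition semilinear_map (F : fieldType) (n : nat) (g : 'rV[F]_n -> 'rV[F]_n) : Prop :=
  exists sigma : {rmorphism F -> F},
    forall (a : F) (u v : 'rV[F]_n), g (a *: u + v) = sigma a *: g u + g v.

Definition linear_map (F : fieldType) (n : nat) (g : 'rV[F]_n -> 'rV[F]_n) : Prop :=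
  forall (a : F) (u v : 'rV[F]_n), g (a *: u + v) = a *: g u + g v.

Definition scalar_map (F : fieldType) (n : nat) (g : 'rV[F]_n -> 'rV[F]_n) : Prop :=
  exists2 lam : F, lam != 0 & forall v, g v = lam *: v.

(* phi_beta for the basis beta whose vectors are the rows of the invertible
   matrix B: sum_i lam_i v_i |-> sum_i lam_i^p v_i.  Coordinates of v in beta
   are v *m invmx B. *)
Definition phi_beta (F : fieldType) (n : nat) (B : 'M[F]_n) (p : nat)
  (v : 'rV[F]_n) : 'rV[F]_n :=
  map_mx (fun x : F => x ^+ p) (v *m invmx B) *m B.

(* Main.v *)
Require Import Defs.
From mathcomp Require Import all_boot all_order all_algebra all_fingroup cyclic finfield.
From mathcomp Require Import zify.
From Stdlib Require Import Classical.
Set Implicit Arguments. Unset Strict Implicit. Unset Printing Implicit Defensive.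
Import GRing.Theory.
Local Open Scope ring_scope.

Section Frob.
Variables (F : finFieldType) (p f : nat).
Hypotheses (hp : prime p) (hq : #|F| = (p ^ f)%N).

Lemma pchF : p \in [pchar F].
Proof. exact: card_finPcharP hq hp. Qed.

Lemma frobD k (x y : F) : (x + y) ^+ (p ^ k) = x ^+ (p ^ k) + y ^+ (p ^ k).
Proof.
elim: k x y => [|k IH] x y; first by rewrite !expn0 !expr1.
by rewrite expnSr !exprM IH -!(pFrobenius_autE pchF) rmorphD.
Qed.

Lemma frobf (x : F) : x ^+ (p ^ f) = x.
Proof. by rewrite -hq expf_card. Qed.

Lemma frob_add_f k (x : F) : x ^+ (p ^ (k + f)) = x ^+ (p ^ k).
Proof. by rewrite expnD exprM frobf. Qed.

Lemma frob_mul_f k a (x : F) : x ^+ (p ^ (k + a * f)) = x ^+ (p ^ k).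
Proof.
elim: a k => [|a IH] k; first by rewrite mul0n addn0.
by rewrite mulSn addnA IH frob_add_f.
Qed.

Lemma f_gt0 : (0 < f)%N.
Proof.
case: f hq => // h0; have := finNzRing_gt1 F.
by rewrite /= h0 expn0.
Qed.

Lemma p_gt1 : (1 < p)%N.
Proof. exact: prime_gt1. Qed.

Lemma prim_gen : exists a : F, (#|F|.-1).-primitive_root a.
Proof.
have q1 : (0 < #|F|.-1)%N.
  by have := finNzRing_gt1 F; case: #|F| => // [[]].
have A : all (#|F|.-1).-unity_root (enum (predC1 (0 : F))).
  apply/allP => x; rewrite mem_enum /= unity_rootE => nz.
  have := expf_card x; rewrite -(prednK (ltnW (finNzRing_gt1 F))) exprS.
  by move=> h; apply/eqP/(mulfI nz); rewrite mulr1.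
have S : (#|F|.-1 <= size (enum (predC1 (0 : F)%R)))%N by rewrite -cardE cardC1.
have /hasP [a _ ha] := @has_prim_root F _ _ q1 A (enum_uniq _) S.
by exists a.
Qed.

Lemma unit_pow (a x : F) : (#|F|.-1).-primitive_root a -> x != 0 ->
  exists j : nat, x = a ^+ j.
Proof.
move=> pa nz.
have : x ^+ #|F|.-1 = 1.
  have := expf_card x; rewrite -(prednK (ltnW (finNzRing_gt1 F))) exprS.
  by move=> h; apply/(mulfI nz); rewrite mulr1.
by case/(prim_rootP pa) => j ->; exists j.
Qed.

Lemma fixp_nat (c : F) : c ^+ p = c -> exists k : nat, c = k%:R.
Proof.
move=> hc.
case: (boolP (c \in [seq (k%:R : F) | k <- iota 0 p])).
  by case/mapP => k _ ->; exists k.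
move=> nin; exfalso.
pose Q : {poly F} := 'X^p - 'X.
have szQ : size Q = p.+1.
  rewrite /Q size_polyDl size_polyXn // size_polyN size_polyX ltnS.
  exact: p_gt1.
have Q0 : Q != 0 by rewrite -size_poly_eq0 szQ.
have rootQ x : x ^+ p = x -> root Q x.
  by move=> hx; rewrite /root /Q !hornerE hx subrr.
suff : (size (c :: [seq (k%:R : F) | k <- iota 0 p]) < size Q)%N.
  by rewrite szQ /= size_map size_iota ltnn.
apply: max_poly_roots Q0 _ _.
- rewrite /= rootQ //=; apply/allP => x /mapP [k _ ->].
  by apply: rootQ; rewrite -(pFrobenius_autE pchF) rmorph_nat.
- rewrite /= nin /=; rewrite map_inj_in_uniq ?iota_uniq //.
  move=> k l; rewrite !mem_iota /= !add0n => kp lp e.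
  wlog kl : k l kp lp e / (k <= l)%N.
    move=> W; case: (leqP k l) => [|/ltnW] h; first exact: W.
    by apply/esym/W.
  apply/eqP; rewrite eqn_leq kl /=.
  have : (p %| l - k)%N.
    by rewrite (dvdn_pcharf pchF) natrB // e subrr.
  move=> d; apply: contraLR d; rewrite -ltnNge => lt.
  rewrite gtnNdvd // ?subn_gt0 //.
  by apply: leq_ltn_trans (leq_subr _ _) lp.
Qed.

Lemma rmorph_frob (s : {rmorphism F -> F}) :
  exists i, (i < f)%N /\ forall x, s x = x ^+ (p ^ i).
Proof.
have [a pa] := prim_gen.
have pch := pchF.
pose P : {poly F} := \prod_(0 <= i < f) ('X - (a ^+ (p ^ i))%:P).
have fP : map_poly (pFrobenius_aut pch) P = P.
  rewrite /P rmorph_prod /=.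
  under eq_bigr do rewrite (map_polyXsubC (pFrobenius_aut pch)) /= pFrobenius_autE -exprM -expnSr.
  case: f f_gt0 frobf => // f' _ hf.
  rewrite big_nat_recr //= big_nat_recl //= hf expn0 expr1 mulrC.
  by congr (_ * _); apply: eq_bigr => i _.
have cP j : exists k : nat, P`_j = k%:R.
  apply: fixp_nat; rewrite -(pFrobenius_autE pch).
  by rewrite -(coef_map (pFrobenius_aut pch)) fP.
have sP : map_poly s P = P.
  apply/polyP => j; rewrite coef_map /=.
  by have [k ->] := cP j; rewrite rmorph_nat.
have Pa : P.[a] = 0.
  rewrite /P horner_prod; case: f f_gt0 => // f' _.
  by rewrite big_nat_recl //= !hornerE expn0 expr1 subrr mul0r.
have : P.[s a] = 0 by rewrite -{1}sP horner_map Pa rmorph0.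
rewrite /P horner_prod => /eqP; rewrite prodf_seq_eq0 => /hasP [i].
rewrite mem_iota add0n /= => ifl; rewrite !hornerE subr_eq0 => /eqP sa.
exists i; split; [by rewrite subn0 in ifl | move=> x].
case: (eqVneq x 0) => [->|nz]; first by rewrite rmorph0 expr0n expn_eq0 eqn0Ngt (prime_gt0 hp).
have [j ->] := unit_pow pa nz.
by rewrite rmorphXn sa -!exprM mulnC.
Qed.

End Frob.
Section SLsec.
Variables (F : finFieldType) (p f n : nat).
Hypotheses (hp : prime p) (hq : #|F| = (p ^ f)%N).
Variables (B : 'M[F]_n).
Hypothesis hB : B \in unitmx.

Definition SL k (g : 'rV[F]_n -> 'rV[F]_n) :=
  forall (a : F) (u v : 'rV[F]_n), g (a *: u + v) = a ^+ (p ^ k) *: g u + g v.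

Lemma SL_add k g : SL k g -> forall u v, g (u + v) = g u + g v.
Proof. by move=> h u v; rewrite -{1}(scale1r u) h expr1n scale1r. Qed.

Lemma SL_0 k g : SL k g -> g 0 = 0.
Proof.
move=> h; apply: (addrI (g 0)); by rewrite -(SL_add h) !addr0.
Qed.

Lemma SL_scale k g : SL k g -> forall a u, g (a *: u) = a ^+ (p ^ k) *: g u.
Proof. by move=> h a u; rewrite -[a *: u]addr0 h (SL_0 h) addr0. Qed.

Lemma SL_sum k g : SL k g -> forall (I : Type) (r : seq I) (P : pred I) (E : I -> 'rV[F]_n),
  g (\sum_(i <- r | P i) E i) = \sum_(i <- r | P i) g (E i).
Proof. by move=> h I r P E; apply: (big_morph g (SL_add h) (SL_0 h)). Qed.

Lemma SL_comp k l g h : SL k g -> SL l h -> SL (l + k) (fun v => g (h v)).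
Proof. by move=> Sg Sh a u v; rewrite Sh Sg expnD exprM. Qed.

Lemma SL_iter k g : SL k g -> forall j, SL (k * j) (iter j g).
Proof.
move=> Sg; elim=> [|j IH] a u v /=; first by rewrite muln0 expn0 expr1.
by rewrite (SL_comp Sg IH) mulnS addnC.
Qed.

Lemma SL_mod k a g : SL (k + a * f) g -> SL k g.
Proof. by move=> h x u v; rewrite h (frob_mul_f hq). Qed.

Lemma SL_modr k a g : SL k g -> SL (k + a * f) g.
Proof. by move=> h x u v; rewrite h (frob_mul_f hq). Qed.

Lemma SL_inv k (s : {perm 'rV[F]_n}) : (k <= f)%N -> SL k s -> SL (f - k) (s^-1)%g.
Proof.
move=> kf Ss a u v; apply: (@perm_inj _ s); rewrite permKV Ss !permKV.
by rewrite -exprM -expnD subnK // (frobf hq).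
Qed.

Lemma SL_lin g : SL 0 g <-> linear_map g.
Proof. by split=> h a u v; rewrite h ?expn0 ?expr1. Qed.

Lemma SL_scal k g c : SL k g -> SL k (fun v => c *: g v).
Proof. by move=> h a u v; rewrite h scalerDr !scalerA mulrC. Qed.

Local Notation phi := (phi_beta B p).

Lemma iter_phi k v : iter k phi v = map_mx (fun x => x ^+ (p ^ k)) (v *m invmx B) *m B.
Proof.
elim: k => [|k IH] /=.
  rewrite -{1}(mulmxKV hB v); congr (_ *m _); apply/matrixP => i j.
  by rewrite [RHS]mxE expn0 expr1.
rewrite IH /phi_beta mulmxK //; congr (_ *m _); apply/matrixP => i j.
by rewrite !mxE -exprM expnSr.
Qed.

Lemma phi_SL k : SL k (iter k phi).
Proof.
move=> a u v; rewrite !iter_phi scalemxAl -mulmxDl; congr (_ *m _).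
apply/matrixP => i j; rewrite mulmxDl -scalemxAl !mxE.
by rewrite (frobD hp hq) exprMn.
Qed.

Lemma phi_f v : iter f phi v = v.
Proof.
rewrite iter_phi -[RHS](mulmxKV hB v); congr (_ *m _).
by apply/matrixP => i j; rewrite mxE (frobf hq).
Qed.

Lemma phi_red s : exists i, [/\ (1 <= i)%N, (i <= f)%N & forall v, iter s phi v = iter i phi v].
Proof.
elim: s => [|s [i [i1 if_ e]]].
  by exists f; split => //; [exact: (f_gt0 hq) | move=> v; rewrite phi_f].
case: (ltnP i f) => [lt|ge].
  by exists i.+1; split => // v; rewrite iterS e.
have ef : i = f by apply/eqP; rewrite eqn_leq if_ ge.
exists 1%N; split => //; first exact: (f_gt0 hq).
by move=> v; rewrite iterS e ef phi_f.
Qed.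

Definition formk s (g : 'rV[F]_n -> 'rV[F]_n) :=
  exists2 c : F, c != 0 & forall v, g v = c *: iter s phi v.

Lemma form_comp s t g h : formk s g -> formk t h -> formk (s + t) (fun v => g (h v)).
Proof.
move=> [c c0 eg] [d d0 eh]; exists (c * d ^+ (p ^ s)).
  by rewrite mulf_neq0 // expf_neq0.
move=> v; rewrite eg eh (SL_scale (phi_SL s)) scalerA iterD.
by [].
Qed.

Lemma form_iter s g : formk s g -> forall a, formk (s * a) (iter a g).
Proof.
move=> fg; elim=> [|a IH].
  by exists 1; rewrite ?oner_eq0 // => v; rewrite muln0 scale1r.
by rewrite mulnS; apply: (form_comp fg IH).
Qed.

End SLsec.
Definition dd (P j : nat) : nat := (\sum_(i < j) P ^ i)%N.

Lemma ddS P j : dd P j.+1 = (1 + P * dd P j)%N.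
Proof.
rewrite /dd big_ord_recl expn0; congr (_ + _)%N.
by rewrite big_distrr /=; apply: eq_bigr => i _; rewrite /bump /= add1n expnS.
Qed.

Lemma dd_eq P j : (0 < P)%N -> ((P - 1) * dd P j).+1 = (P ^ j)%N.
Proof.
move=> P0; elim: j => [|j IH]; first by rewrite /dd big_ord0 muln0.
rewrite ddS expnS -IH.
case: P P0 {IH} => // P _; rewrite subn1 /=. nia.
Qed.

Section Descent.
Variables (F : finFieldType) (p f n : nat).
Hypotheses (hp : prime p) (hq : #|F| = (p ^ f)%N).

Lemma norm_surj (k0 m : nat) (mu : F) : (0 < k0)%N -> (k0 * m = f)%N -> mu != 0 ->
  mu ^+ (p ^ k0) = mu -> exists2 lam : F, lam != 0 & lam ^+ (dd (p ^ k0) m) = mu.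
Proof.
move=> k0p km mu0 muP.
have [a pa] := prim_gen F.
have q1 : (0 < #|F|.-1)%N.
  by have := finNzRing_gt1 F; case: #|F| => // [[]].
have a0 : a != 0.
  apply/negP => /eqP a0; have := prim_expr_order pa.
  by rewrite a0 expr0n eqn0Ngt q1 /= => /eqP; rewrite eq_sym oner_eq0.
have [t mut] := unit_pow pa mu0.
set P := (p ^ k0)%N.
have P1 : (1 < P)%N by rewrite -{1}(expn0 p) ltn_exp2l ?(p_gt1 hp).
have qd : #|F|.-1 = ((P - 1) * dd P m)%N.
  apply: succn_inj; rewrite prednK ?(ltnW (finNzRing_gt1 F)) //.
  by rewrite (@dd_eq P m (ltnW P1)) /P -expnM km hq.
have mu1 : mu ^+ (P - 1) = 1.
  apply: (mulfI mu0); rewrite mulr1 -exprS subn1 prednK ?(ltnW P1) //.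
have : (#|F|.-1 %| t * (P - 1))%N by rewrite (prim_order_dvd pa) exprM -mut mu1.
rewrite qd mulnC dvdn_pmul2r ?subn_gt0 // => dt.
exists (a ^+ (t %/ dd P m)); first exact: expf_neq0.
by rewrite -exprM divnK.
Qed.

Variable (T : 'rV[F]_n -> 'rV[F]_n) (k0 m : nat).
Hypotheses (k0p : (0 < k0)%N) (km : (k0 * m = f)%N) (ST : SL p k0 T)
  (Tm : forall v, iter m T v = v).

Lemma descent : exists2 Wm : 'M[F]_n, Wm \in unitmx &
  forall c : 'rV_n, T (c *m Wm) = map_mx (fun x => x ^+ (p ^ k0)) c *m Wm.
Proof.
have m0 : (0 < m)%N.
  by case: m km (f_gt0 hq) => //; rewrite muln0 => <-.
pose fixr u := if T u == u then u else 0.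
have fixrT u : T (fixr u) = fixr u.
  by rewrite /fixr; case: eqP => // _; rewrite (SL_0 ST).
pose S := \matrix_(i < #|{: 'rV[F]_n}|) fixr (enum_val i).
have subS u : T u = u -> (u <= S)%MS.
  move=> Tu; have <- : row (enum_rank u) S = u by rewrite rowK enum_rankK /fixr Tu eqxx.
  exact: row_sub.
have tr_fix w : T (\sum_(0 <= i < m) iter i T w) = \sum_(0 <= i < m) iter i T w.
  rewrite (SL_sum ST); case: m m0 Tm => // m' _ Tm'.
  rewrite big_nat_recr //= big_nat_recl //= -iterS Tm' addrC; congr (_ + _).
have allS (v : 'rV[F]_n) : (v <= S)%MS.
  case: (boolP (v <= S)%MS) => // nv; exfalso.
  set K := cokermx S.
  have [j zj] : exists j, (v *m K) 0 j != 0.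
    apply: NNPP => hn; move: nv; rewrite submxE; apply/negP; rewrite negbK.
    apply/eqP/rowP => j; rewrite [RHS]mxE; apply/eqP; apply: contraT => hj.
    by exfalso; apply: hn; exists j.
  pose bi i := (iter i T v *m K) 0 j.
  have hc c : \sum_(i < m) bi i * c ^+ (p ^ (k0 * i)) = 0.
    have : ((\sum_(0 <= i < m) iter i T (c *: v))%R <= S)%MS by apply: subS; apply: tr_fix.
    rewrite submxE => /eqP e; have := congr1 (fun M : 'rV[F]_n => M 0 j) e.
    rewrite mulmx_suml summxE [RHS]mxE big_mkord => E; apply: etrans E; apply: eq_bigr => i _.
    rewrite (SL_scale (SL_iter ST i)) -scalemxAl mxE mulrC.
    by [].
  pose Pl : {poly F} := \sum_(i < m) bi i *: 'X^(p ^ (k0 * i)).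
  have Pl1 : Pl`_1 = bi 0%N.
    rewrite /Pl coef_sum (bigD1 (Ordinal m0)) //= coefZ coefXn muln0 expn0 eqxx mulr1.
    rewrite big1 ?addr0 // => i ni.
    rewrite coefZ coefXn; case: eqP => [e|]; last by rewrite mulr0.
    have : (p ^ 0 < p ^ (k0 * i))%N.
      rewrite ltn_exp2l ?(p_gt1 hp) // muln_gt0 k0p /= lt0n.
      by apply: contra ni => /eqP i0; apply/eqP/val_inj.
    by rewrite -e expn0.
  have Pl0 : Pl != 0.
    by apply/eqP => e; move: zj; rewrite -[X in X != 0]/(bi 0%N) -Pl1 e coef0 eqxx.
  set N := (p ^ (k0 * m.-1)).+1.
  have szP : (size Pl <= N)%N.
    rewrite /Pl; apply: (big_ind (fun P : {poly F} => size P <= N)%N).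
    - by rewrite size_poly0.
    - by move=> P1 P2 h1 h2; apply: leq_trans (size_polyD _ _) _; rewrite geq_max h1 h2.
    move=> i _; apply: leq_trans (size_scale_leq _ _) _.
    rewrite size_polyXn ltnS leq_exp2l ?(p_gt1 hp) // leq_mul2l -ltnS prednK //.
    by rewrite ltn_ord orbT.
  have := max_poly_roots Pl0 (rs := enum F).
  rewrite enum_uniq -cardE.
  have -> : all (root Pl) (enum F).
    apply/allP => c _; rewrite /root /Pl horner_sum.
    apply/eqP; apply: etrans (hc c); apply: eq_bigr => i _.
    by rewrite hornerZ hornerXn.
  move=> /(_ isT isT) lt; have := leq_trans lt szP.
  rewrite /N ltnS hq leqNgt ltn_exp2l ?(p_gt1 hp) // -km ltn_pmul2l //.
  by rewrite prednK // leqnn.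
have fS : row_full S.
  by rewrite -sub1mx; apply/row_subP => j; apply: allS.
exists (rowsub (fullrankfun fS) S); first exact: fullrowsub_unit.
move=> c; rewrite !mulmx_sum_row (SL_sum ST); apply: eq_bigr => i _.
by rewrite (SL_scale ST) row_rowsub rowK fixrT mxE.
Qed.

End Descent.


Lemma ex_min_prop (P : nat -> Prop) : (exists n, P n) ->
  exists n, P n /\ forall m, (m < n)%N -> ~ P m.
Proof.
move=> [n Pn].
suff : forall N n, (n <= N)%N -> P n -> exists n, P n /\ forall m, (m < n)%N -> ~ P m.
  by move/(_ n n (leqnn n) Pn).
elim=> [|N IH] {}n nN {}Pn.
  by move: nN; rewrite leqn0 => /eqP e; subst n; exists 0%N; split => // m.
case: (classic (exists m, (m < n)%N /\ P m)) => [[m [mn Pm]] | no].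
  by apply: (IH m) => //; rewrite -ltnS (leq_trans mn nN).
by exists n; split => // m mn Pm; apply: no; exists m.
Qed.

Unset Implicit Arguments.
Set Strict Implicit.

Theorem mainTheorem12 (F : finFieldType) (p f n : nat)
  (hp : prime p) (hq : #|F| = (p ^ f)%N) (hn : (2 <= n)%N)
  (hnq : ~ ((n = 2%N /\ #|F| = 2%N) \/ (n = 2%N /\ #|F| = 3%N)))
  (B : 'M[F]_n) (hB : B \in unitmx)
  (H : {group {perm 'rV[F]_n}})
  (hH : forall h, h \in H -> semilinear_map (fun v => h v))
  (hHZ : forall h, h \in H -> linear_map (fun v => h v) -> scalar_map (fun v => h v)) :
  exists b : {perm 'rV[F]_n},
    linear_map (fun v => b v) /\
    forall h, h \in (H :^ b)%g ->
      exists i : nat, [/\ (1 <= i)%N, (i <= f)%N &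
        exists g : 'rV[F]_n -> 'rV[F]_n,
          scalar_map g /\ forall v, h v = g (iter i (phi_beta B p) v)].
Proof.
have f0 := f_gt0 hq.
have hSL h : h \in H -> exists k, SL p k (fun v => h v).
  move=> hH'; have [s es] := hH h hH'; have [i [_ ei]] := rmorph_frob hp hq s.
  by exists i => a u v; rewrite es ei.
have SL1 : SL p f (fun v => (1%g : {perm 'rV[F]_n}) v).
  by move=> a u v; rewrite !perm1 (frobf hq).
have ex : exists k, (0 < k)%N /\ exists2 h, h \in H & SL p k (fun v => h v).
  by exists f; split => //; exists 1%g => //; apply: group1.
have [k0 [[k0p [h0 h0H Sh0]] k0min]] := @ex_min_prop _ ex.
have k0f : (k0 <= f)%N.
  rewrite leqNgt; apply/negP => lt; apply: (k0min f lt); split => //.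
  by exists 1%g => //; apply: group1.
have Sinv := SL_inv hq k0f Sh0.
have dec h k : h \in H -> SL p k (fun v => h v) -> (k0 %| k)%N /\
    exists2 c : F, c != 0 & forall v, h v = c *: iter (k %/ k0) h0 v.
  move=> hH' Sh.
  set a := (k %/ k0)%N; set r := (k %% k0)%N.
  pose g := ((h0^-1) ^+ a * h)%g.
  have gH : g \in H by rewrite groupM ?groupX ?groupV.
  have eg v : g v = h (iter a (h0^-1)%g v) by rewrite permM permX.
  have Sg : SL p r (fun v => g v).
    have S1 := SL_comp Sh (SL_iter Sinv a).
    apply: (@SL_mod _ _ _ _ hq r a); move=> x u v; rewrite !eg.
    have e : ((f - k0) * a + k = r + a * f)%N.
      have kd := divn_eq k k0; rewrite -/a -/r in kd.
      rewrite {1}kd mulnBl addnA [(a * k0)%N]mulnC subnK ?leq_mul2r ?k0f ?orbT //.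
      by rewrite addnC mulnC.
    by rewrite -e; apply: S1.
  have r0 : r = 0%N.
    apply/eqP; apply: contraT; rewrite -lt0n => rp.
    exfalso; apply: (k0min r (ltn_pmod _ k0p)); split => //; exists g => //.
  split; first by rewrite /dvdn -/r r0.
  have [c c0 ec] : scalar_map (fun v => g v).
    apply: (hHZ g gH); apply/(SL_lin p); by move: Sg; rewrite r0.
  exists c => // v.
  have -> : h = (h0 ^+ a * g)%g.
    by rewrite /g mulgA expVgn mulgV mul1g.
  by rewrite permM ec permX.
have [kf _] := dec 1%g f (group1 H) SL1.
set m := (f %/ k0)%N.
have km : (k0 * m = f)%N by rewrite /m mulnC divnK.
have hm : SL p 0 (fun v => (h0 ^+ m)%g v).
  apply: (@SL_mod _ _ _ _ hq 0 1); move=> x u v; rewrite !permX.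
  by rewrite mul1n add0n -{1}km; apply: SL_iter.
have [mu mu0 emu] := hHZ _ (groupX m h0H) (proj1 (SL_lin p _) hm).
have emu' v : iter m h0 v = mu *: v by rewrite -permX emu.
have n0 : (0 < n)%N by apply: leq_trans hn.
set e := (const_mx 1 : 'rV[F]_n).
have e0 : e != 0.
  apply/eqP => e0; have := congr1 (fun M : 'rV[F]_n => M 0 (Ordinal n0)) e0.
  by rewrite !mxE => /eqP; rewrite oner_eq0.
have muP : mu ^+ (p ^ k0) = mu.
  set w := (h0^-1)%g e.
  have e1 := iterS m h0 w; rewrite iterSr !emu' (SL_scale Sh0) /w permKV in e1.
  apply/eqP; rewrite -subr_eq0; move/eqP: e1; rewrite eq_sym -subr_eq0 -scalerBl.
  by rewrite scaler_eq0 (negbTE e0) orbF.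
have [lam lam0 elam] : exists2 lam : F, lam != 0 & lam ^+ (dd (p ^ k0) m) = mu^-1.
  by apply: (norm_surj hp hq k0p km); rewrite ?invr_neq0 // exprVn muP.
pose T v := lam *: h0 v.
have ST : SL p k0 T by apply: SL_scal.
have iterT j v : iter j T v = lam ^+ dd (p ^ k0) j *: iter j h0 v.
  elim: j => [|j IH] /=; first by rewrite /dd big_ord0 expr0 scale1r.
  rewrite IH /T (SL_scale Sh0) scalerA ddS exprD expr1 mulnC exprM.
  by [].
have Tm v : iter m T v = v by rewrite iterT emu' scalerA elam mulVf // scale1r.
have [Wm Wu eW] := descent hp hq k0p km ST Tm.
pose bf (v : 'rV[F]_n) := v *m invmx Wm *m B.
pose bg (v : 'rV[F]_n) := v *m invmx B *m Wm.
have bK : cancel bf bg by move=> v; rewrite /bf /bg mulmxK // mulmxKV.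
have bKV : cancel bg bf by move=> v; rewrite /bf /bg mulmxK // mulmxKV.
pose b := perm (can_inj bK).
have bE v : b v = bf v by rewrite permE.
have biE v : (b^-1)%g v = bg v.
  by apply: (@perm_inj _ b); rewrite permKV bE bKV.
exists b; split.
  by move=> a u v; rewrite !bE /bf !mulmxDl -!scalemxAl.
move=> h'; rewrite mem_conjg => hH'.
have eh' : h' = ((h' ^ b^-1) ^ b)%g by rewrite conjgKV.
move: (h' ^ b^-1)%g hH' eh' => h hH' eh'.
have [k Sk] := hSL h hH'.
have [_ [c c0 ec]] := dec h k hH' Sk.
set a := (k %/ k0)%N in ec.
pose G v := b (h0 ((b^-1)%g v)).
have FG : formk p B k0 G.
  exists lam^-1; first by rewrite invr_neq0.
  move=> v; rewrite /G.
  have -> : h0 ((b^-1)%g v) = lam^-1 *: T ((b^-1)%g v).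
    by rewrite /T scalerA mulVf // scale1r.
  rewrite biE /bg eW bE /bf -scalemxAl mulmxK // (iter_phi p hB).
  by rewrite scalemxAl.
have iG j v : iter j G v = b (iter j h0 ((b^-1)%g v)).
  elim: j => [|j IH] /=; first by rewrite permKV.
  by rewrite IH /G permK.
have [d d0 ed] := form_iter hp hq hB FG a.
have [i [i1 if_ ei]] := phi_red hq hB (k0 * a).
exists i; split => //.
exists (fun v => (c * d) *: v); split.
  by exists (c * d) => //; rewrite mulf_neq0.
move=> v; rewrite eh' conjgE !permM ec.
have bZ (x : F) y : b (x *: y) = x *: b y by rewrite !bE /bf -!scalemxAl.
rewrite bZ -iG ed scalerA ei.
by [].
Qed.
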